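(* Let $F$ be a field of characteristic zero and $A$ a $\#$-superalgebra over $F$. Let $n_1,n_2,n_3,n_4,m$ be positive integers, $\langle n\rangle=(n_1,n_2,n_3,n_4)$, $i_0\in\{1,2,3,4\}$ with $n_{i_0}\ge m^2$, and $Q=\{q_1,\dots,q_{m^2}\}\subseteq\{1,\dots,n_{i_0}\}$ with $|Q|=m^2$. Let $\rho=\rho_1\otimes\cdots\otimes\rho_4$ where $\rho_{i_0}\in FS_Q$ and $\rho_j\in FS_{n_j}$ for $j\ne i_0$, and let $f\in P_{\langle n\rangle}$ be such that $\rho f\not\equiv0$ in $A$. Let $V_{i_0}$ denote the variables of type $i_0$ (i.e. $y_{0,\cdot}$ if $i_0=1$, $z_{0,\cdot}$ if $i_0=2$, $y_{1,\cdot}$ if $i_0=3$, $z_{1,\cdot}$ if $i_0=4$), and $v_{k}$ the variable of type $i_0$ with second index $k$. Then there exist integers $t_1,t_2,t_3,t_4\ge0$, with $t=t_1+t_2+t_3+t_4$, $t_{i_0}\ge m^2$ and $m^2\le t\le 2m^2+1$, and a multilinear $\#$-supermonomial $w$ whose variables are: for each type $j\ne i_0$, the first $t_j$ variables of type $j$; and, for type $i_0$, a set $X_{t_{i_0}}$ of $t_{i_0}$ variables consisting of $v_{q_1},\dots,v_{q_{m^2}}$ together with $t_{i_0}-m^2$ further variables chosen among $\{v_1,\dots,v_{t_{i_0}}\}\setminus\{v_{q_1},\dots,v_{q_{m^2}}\}$; such that $$(Id_1\otimes\cdots\otimes\rho_{i_0}\otimes\cdots\otimes Id_4)\,w\not\equiv0\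 \text{ in } A,$$ where $\rho_{i_0}$ acts by permuting the indices in $Q$ of the variables $v_{q_1},\dots,v_{q_{m^2}}$ and all other factors act trivially.
   Context: All algebras are associative over $F$. A superalgebra is $A=A_0\oplus A_1$; a superinvolution is an $F$-linear $\#$ with $A_i^\#\subseteq A_i$, $(c^\#)^\#=c$, $(ab)^\#=(-1)^{\deg a\deg b}b^\#a^\#$; a graded involution is $F$-linear $\#$ with $A_i^\#\subseteq A_i$, $(c^\#)^\#=c$, $(ab)^\#=b^\#a^\#$; a $\#$-superalgebra carries one of these; $A_i^\pm=\{a\in A_i:a^\#=\pm a\}$. $\mathcal F$ is the free non-unital associative algebra on variables $y_{i,j}$ (symmetric) and $z_{i,j}$ (skew), $i\in\{0,1\}$, $j\ge1$; the variables $y_{0,j}$, $z_{0,j}$, $y_{1,j}$, $z_{1,j}$ are said to be of type 1, 2, 3, 4 respectively; variables with first index $i$ have $\mathbb Z_2$-degree $i$, and $\mathcal F$ carries the induced superinvolution/graded involution. A $\#$-supermonomial is a monomial of $\mathcal F$. $g\equiv0$ in $A$ means $g$ vanishes under all substitutions $y_{0,j}\mapsto A_0^+$, $z_{0,j}\mapsto A_0^-$, $y_{1,j}\mapsto A_1^+$, $z_{1,j}\mapsto A_1^-$. $P_{\langle n\rangle}$ is the span of monomials multilinear in $y_{0,1..n_1},z_{0,1..n_2},y_{1,1..n_3},z_{1,1..n_4}$; $FS_{n_1}\otimes\cdots\otimes FS_{n_4}$ acts on it by permuting second indices of each type separately, and $S_Q$ denotes the permutations of $\{1,\dots,n_{i_0}\}$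 fixing every point outside $Q$. *)

(* Defs.v *)
From HB Require Import structures.
From mathcomp Require Import all_boot all_order all_fingroup all_algebra.
Set Implicit Arguments. Unset Strict Implicit. Unset Printing Implicit Defensive.
Import GRing.Theory.
Local Open Scope ring_scope.

(* A is an F-vector space with an associative bilinear (possibly non-unital)
   multiplication [mul], a Z2-grading A = A0 (+) A1 given by two subspaces,
   and a map [sharp] which is a superinvolution (kind = true) or a graded
   involution (kind = false). *)

Definition hom (A : Type) (A0 A1 : A -> Prop) (i : bool) : A -> Prop :=
  if i then A1 else A0.

Definition is_subspace (F : fieldType) (A : lmodType F) (S : A -> Prop) :=
  S 0 /\ forall (k : F) (a b : A), S a -> S b -> S (k *: a + b).

Definition sharp_superalgebra (F : fieldType) (A : lmodType F)
    (mul : A -> A -> A) (A0 A1 : A -> Prop) (sharp : A -> A) (kind : bool) :=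
  [/\
      (forall a b c, mul a (mul b c) = mul (mul a b) c),
      (forall (k : F) a b c, mul (k *: a + b) c = k *: mul a c + mul b c),
      (forall (k : F) a b c, mul a (k *: b + c) = k *: mul a b + mul a c),
      [/\ is_subspace A0, is_subspace A1,
          (forall a, exists a0 a1, [/\ A0 a0, A1 a1 & a = a0 + a1]),
          (forall a, A0 a -> A1 a -> a = 0) &
          (forall (i j : bool) a b, hom A0 A1 i a -> hom A0 A1 j b ->
             hom A0 A1 (i (+) j) (mul a b))] &
      [/\ (forall (k : F) a b, sharp (k *: a + b) = k *: sharp a + sharp b),
          (forall (i : bool) a, hom A0 A1 i a -> hom A0 A1 i (sharp a)),
          (forall a, sharp (sharp a) = a) &
          (if kind then
             forall (i j : bool) a b, hom A0 A1 i a -> hom A0 A1 j b ->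
               sharp (mul a b) = (-1) ^+ (i && j) *: mul (sharp b) (sharp a)
           else forall a b, sharp (mul a b) = mul (sharp b) (sharp a))]].

(* A variable is a pair (j, k): j : 'I_4 is the type (j = 0,1,2,3 stands for
   types 1,2,3,4, i.e. y_0, z_0, y_1, z_1) and k : nat is the second index,
   0-based (k stands for the second index k+1). *)
Definition var := ('I_4 * nat)%type.

Definition var_deg (j : 'I_4) : bool := (2 <= j)%N.
Definition var_skew (j : 'I_4) : bool := odd j.

(* A monomial is a (nonempty) word in the variables; a polynomial of the free
   non-unital algebra is a formal F-linear combination of monomials. *)
Definition monom := seq var.
Definition fpoly (F : fieldType) := seq (F * monom).

(* admissible substitutions: y_0 -> A0^+, z_0 -> A0^-, y_1 -> A1^+, z_1 -> A1^- *)
Definition admissible (F : fieldType) (A : lmodType F) (A0 A1 : A -> Prop)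
    (sharp : A -> A) (phi : var -> A) :=
  forall v : var, hom A0 A1 (var_deg v.1) (phi v) /\
    sharp (phi v) = (if var_skew v.1 then -1 else 1) *: phi v.

Definition eval_mon (F : fieldType) (A : lmodType F) (mul : A -> A -> A)
    (phi : var -> A) (w : monom) : A :=
  if w is x :: w' then foldl (fun acc y => mul acc (phi y)) (phi x) w' else 0.

Definition eval_poly (F : fieldType) (A : lmodType F) (mul : A -> A -> A)
    (phi : var -> A) (p : fpoly F) : A :=
  \sum_(c <- p) c.1 *: eval_mon mul phi c.2.

Definition id_zero (F : fieldType) (A : lmodType F) (mul : A -> A -> A)
    (A0 A1 : A -> Prop) (sharp : A -> A) (g : fpoly F) :=
  forall phi, admissible A0 A1 sharp phi -> eval_poly mul phi g = 0.

Definition ml_vars (n : 'I_4 -> nat) : seq var :=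
  [seq (j, k) | j <- enum 'I_4, k <- iota 0 (n j)].

Definition in_P (F : fieldType) (n : 'I_4 -> nat) (f : fpoly F) :=
  all (fun c => perm_eq c.2 (ml_vars n)) f.

(* a permutation s of {1..N} acts on second indices (0-based: on 0..N-1) *)
Definition act_idx (N : nat) (s : 'S_N) (k : nat) : nat :=
  if insub k is Some i then val (s i) else k.

Definition act_var (j : 'I_4) (N : nat) (s : 'S_N) (v : var) : var :=
  if v.1 == j then (v.1, act_idx s v.2) else v.

Definition act_poly (F : fieldType) (j : 'I_4) (N : nat) (r : {ffun 'S_N -> F})
    (p : fpoly F) : fpoly F :=
  flatten [seq [seq (r s * c.1, map (act_var j s) c.2) | c <- p]
          | s <- enum {: 'S_N}].

Definition act_tensor (F : fieldType) (n : 'I_4 -> nat)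
    (rho : forall j : 'I_4, {ffun 'S_(n j) -> F}) (p : fpoly F) : fpoly F :=
  foldr (fun j q => act_poly j (rho j) q) p (enum 'I_4).

Definition in_FS_Q (F : fieldType) (N : nat) (Q : {set 'I_N})
    (r : {ffun 'S_N -> F}) :=
  forall s : 'S_N, r s != 0 -> forall k : 'I_N, k \notin Q -> s k = k.

(* Main.v *)
Require Import Defs.
From HB Require Import structures.
From mathcomp Require Import all_boot all_order all_fingroup all_algebra.
From mathcomp Require Import zify.
From Stdlib Require Import Classical.
Import GRing.Theory.
Local Open Scope ring_scope.
Set Implicit Arguments. Unset Strict Implicit. Unset Printing Implicit Defensive.
Local Notation hom := Defs.hom.

Section Alg.
Variables (F : fieldType) (A : lmodType F) (mul : A -> A -> A).
Variables (A0 A1 : A -> Prop) (sharp : A -> A).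
Hypothesis mulDl : forall (k : F) a b c, mul (k *: a + b) c = k *: mul a c + mul b c.
Hypothesis mulDr : forall (k : F) a b c, mul a (k *: b + c) = k *: mul a b + mul a c.
Hypothesis mulA : forall a b c, mul a (mul b c) = mul (mul a b) c.

Definition prod_seq (xs : seq A) : A :=
  if xs is x :: xs' then foldl mul x xs' else 0.

Lemma foldl_map' (T1 T2 R : Type) (f : R -> T2 -> R) (g : T1 -> T2) z s :
  foldl f z (map g s) = foldl (fun z x => f z (g x)) z s.
Proof. by elim: s z => //= x s IH z. Qed.

Lemma eval_monE (g : var -> A) w : eval_mon mul g w = prod_seq (map g w).
Proof. by case: w => //= x w; rewrite foldl_map'. Qed.

Lemma eval_mon_map (g : var -> A) h w :
  eval_mon mul g (map h w) = eval_mon mul (g \o h) w.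
Proof. by rewrite !eval_monE -map_comp. Qed.

Lemma eq_eval_mon (g1 g2 : var -> A) w : g1 =1 g2 ->
  eval_mon mul g1 w = eval_mon mul g2 w.
Proof. by move=> e; rewrite !eval_monE (eq_map e). Qed.

Lemma eq_eval_poly (g1 g2 : var -> A) (p : fpoly F) : g1 =1 g2 ->
  eval_poly mul g1 p = eval_poly mul g2 p.
Proof. by move=> e; apply: eq_bigr => c _; rewrite (eq_eval_mon _ e). Qed.

Lemma eval_act_poly (g : var -> A) (j : 'I_4) N (r : {ffun 'S_N -> F}) p :
  eval_poly mul g (act_poly j r p) =
  \sum_(s <- enum {: 'S_N}) r s *: eval_poly mul (g \o act_var j s) p.
Proof.
rewrite /eval_poly /act_poly big_flatten big_map; apply: eq_bigr => s _.
rewrite big_map scaler_sumr; apply: eq_bigr => c _ /=.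
by rewrite eval_mon_map scalerA.
Qed.

Lemma xxx0 (x : A) : x = x + x -> x = 0.
Proof. by move=> h; apply: (addrI x); rewrite addr0 -h. Qed.

Lemma mul0l c : mul 0 c = 0.
Proof.
have := mulDl 1 0 0 c; rewrite !scale1r addr0; exact: xxx0.
Qed.

Lemma mul0r c : mul c 0 = 0.
Proof.
have := mulDr 1 c 0 0; rewrite !scale1r addr0; exact: xxx0.
Qed.

Lemma foldl_lin k a b ys :
  foldl mul (k *: a + b) ys = k *: foldl mul a ys + foldl mul b ys.
Proof. by elim: ys a b => //= y ys IH a b; rewrite mulDl IH. Qed.

Lemma foldl_mulr x ys : foldl mul x ys = foldl mul x ys. Proof. by []. Qed.

Lemma prod_lin xs ys k a b :
  prod_seq (xs ++ (k *: a + b) :: ys) =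
  k *: prod_seq (xs ++ a :: ys) + prod_seq (xs ++ b :: ys).
Proof.
case: xs => [|x xs] /=; first by rewrite foldl_lin.
by rewrite !foldl_cat /= mulDr foldl_lin.
Qed.

Lemma prod_add xs ys a b :
  prod_seq (xs ++ (a + b) :: ys) = prod_seq (xs ++ a :: ys) + prod_seq (xs ++ b :: ys).
Proof. by rewrite -{1}(scale1r a) prod_lin scale1r. Qed.

Lemma prod_zero xs ys : prod_seq (xs ++ 0 :: ys) = 0.
Proof.
have := prod_add xs ys 0 0; rewrite addr0; exact: xxx0.
Qed.

Lemma prod_sum (I : Type) (l : seq I) (c : I -> A) xs ys :
  prod_seq (xs ++ (\sum_(i <- l) c i) :: ys) = \sum_(i <- l) prod_seq (xs ++ c i :: ys).
Proof.
elim: l => [|i l IH]; first by rewrite !big_nil prod_zero.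
by rewrite !big_cons prod_add IH.
Qed.

Lemma foldl_assoc a x ys : foldl mul (mul a x) ys = mul a (foldl mul x ys).
Proof. by elim: ys x => //= y ys IH x; rewrite -mulA IH. Qed.

Lemma prod_cons a xs : xs != [::] -> prod_seq (a :: xs) = mul a (prod_seq xs).
Proof. by case: xs => //= x xs _; rewrite foldl_assoc. Qed.

End Alg.

Arguments prod_seq : simpl never.

Lemma sum_nz (F : fieldType) (A : lmodType F) (I : eqType) (l : seq I) (G : I -> A) :
  \sum_(i <- l) G i != 0 -> exists2 i, i \in l & G i != 0.
Proof.
elim: l => [|i l IH]; first by rewrite big_nil eqxx.
rewrite big_cons; case: (eqVneq (G i) 0) => [->|Hi].
  by rewrite add0r => /IH [k kl Hk]; exists k; rewrite // inE kl orbT.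
by move=> _; exists i; rewrite // inE eqxx.
Qed.

Lemma act_var1 j N (s : 'S_N) v : (act_var j s v).1 = v.1.
Proof. by rewrite /act_var; case: ifP. Qed.

Lemma act_var_comm (i j : 'I_4) N M (s : 'S_N) (s' : 'S_M) v : j != i ->
  act_var i s (act_var j s' v) = act_var j s' (act_var i s v).
Proof.
move=> ji; have ij : i != j by rewrite eq_sym.
rewrite /act_var; case: v => a b /=.
case: (eqVneq a j) => [->|aj] /=; first by rewrite (negbTE ji) /= eqxx.
case: (eqVneq a i) => [->|ai] /=; first by rewrite ?eqxx (negbTE ij) /= ?eqxx.
by rewrite (negbTE aj).
Qed.

Section PartA.
Variables (F : fieldType) (A : lmodType F) (mul : A -> A -> A).
Variables (A0 A1 : A -> Prop) (sharp : A -> A).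
Variables (n : 'I_4 -> nat) (i0 : 'I_4) (rho : forall j : 'I_4, {ffun 'S_(n j) -> F}).

Local Notation adm := (admissible A0 A1 sharp).
Local Notation ev := (eval_poly mul).
Local Notation fold l p := (foldr (fun j q => act_poly j (rho j) q) p l).

Lemma adm_comp j N (s : 'S_N) phi : adm phi -> adm (phi \o act_var j s).
Proof. by move=> H v /=; have := H (act_var j s v); rewrite act_var1. Qed.

Lemma pend (l : seq 'I_4) p phi : i0 \notin l -> adm phi ->
  \sum_(s <- enum {: 'S_(n i0)}) rho i0 s *: ev (phi \o act_var i0 s) (fold l p) != 0 ->
  exists2 psi, adm psi &
  \sum_(s <- enum {: 'S_(n i0)}) rho i0 s *: ev (psi \o act_var i0 s) p != 0.
Proof.
elim: l phi => [|j l IH] phi /=; first by move=> _ Hp H; exists phi.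
rewrite inE negb_or => /andP [i0j il] Hphi.
have -> : \sum_(s <- enum {: 'S_(n i0)}) rho i0 s *: ev (phi \o act_var i0 s)
              (act_poly j (rho j) (fold l p)) =
   \sum_(s' <- enum {: 'S_(n j)}) rho j s' *: \sum_(s <- enum {: 'S_(n i0)}) rho i0 s *:
        ev ((phi \o act_var j s') \o act_var i0 s) (fold l p).
  under eq_bigr do rewrite eval_act_poly scaler_sumr.
  rewrite exchange_big; apply: eq_bigr => s' _; rewrite scaler_sumr.
  apply: eq_bigr => s _; rewrite !scalerA mulrC; congr (_ *: _).
  by apply: eq_eval_poly => v /=; rewrite act_var_comm // eq_sym.
move/sum_nz => [s' _]; case: (eqVneq (rho j s') 0) => [->|_]; first by rewrite scale0r eqxx.
move=> H; apply: (IH (phi \o act_var j s')) il _ _; first exact: adm_comp.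
by apply: contraNneq H => ->; rewrite scaler0.
Qed.

Lemma stepA (l : seq 'I_4) p phi : uniq l -> i0 \in l -> adm phi ->
  ev phi (fold l p) != 0 ->
  exists2 psi, adm psi &
  \sum_(s <- enum {: 'S_(n i0)}) rho i0 s *: ev (psi \o act_var i0 s) p != 0.
Proof.
elim: l phi => [|j l IH] phi //= /andP [jl ul]; rewrite inE.
case: (eqVneq i0 j) => [e|ne] /= il Hphi.
  subst j; rewrite eval_act_poly => H; exact: pend jl Hphi H.
rewrite eval_act_poly => /sum_nz [s' _].
case: (eqVneq (rho j s') 0) => [->|_]; first by rewrite scale0r eqxx.
move=> H; apply: (IH (phi \o act_var j s')) ul il _ _; first exact: adm_comp.
by apply: contraNneq H => ->; rewrite scaler0.
Qed.

End PartA.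

Lemma two_nz (F : fieldType) : [pchar F] =i pred0 -> (2%:R : F) != 0.
Proof. by move=> /(_ 2%N); rewrite !inE /= => ->. Qed.

Section Decomp.
Variables (F : fieldType) (A : lmodType F).
Variables (A0 A1 : A -> Prop) (sharp : A -> A).
Hypothesis two : (2%:R : F) != 0.
Hypothesis sub0 : is_subspace A0.
Hypothesis sub1 : is_subspace A1.
Hypothesis dec : forall a, exists a0 a1, [/\ A0 a0, A1 a1 & a = a0 + a1].
Hypothesis sharpL : forall (k : F) a b, sharp (k *: a + b) = k *: sharp a + sharp b.
Hypothesis sharpH : forall (i : bool) a, hom A0 A1 i a -> hom A0 A1 i (sharp a).
Hypothesis sharpK : forall a, sharp (sharp a) = a.

Definition good (t : 'I_4) (a : A) :=
  hom A0 A1 (var_deg t) a /\ sharp a = (if var_skew t then -1 else 1) *: a.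

Lemma sharp0 : sharp 0 = 0.
Proof.
have := sharpL 1 0 0; rewrite !scale1r addr0 => h.
by apply: (addrI (sharp 0)); rewrite addr0 -h.
Qed.

Lemma sharpD a b : sharp (a + b) = sharp a + sharp b.
Proof. by have := sharpL 1 a b; rewrite !scale1r. Qed.

Lemma sharpZ k a : sharp (k *: a) = k *: sharp a.
Proof. by have := sharpL k a 0; rewrite !addr0 sharp0 addr0. Qed.

Lemma sharpN a : sharp (- a) = - sharp a.
Proof. by rewrite -scaleN1r sharpZ scaleN1r. Qed.

Lemma homS i : is_subspace (hom A0 A1 i).
Proof. by case: i. Qed.

Lemma hom0 i : hom A0 A1 i 0.
Proof. by case: (homS i). Qed.

Lemma homD i a b : hom A0 A1 i a -> hom A0 A1 i b -> hom A0 A1 i (a + b).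
Proof. by case: (homS i) => _ h ha hb; have := h 1 a b ha hb; rewrite scale1r. Qed.

Lemma homZ i k a : hom A0 A1 i a -> hom A0 A1 i (k *: a).
Proof. by case: (homS i) => h0 h ha; have := h k a 0 ha h0; rewrite addr0. Qed.

Lemma homN i a : hom A0 A1 i a -> hom A0 A1 i (- a).
Proof. by move=> ha; rewrite -scaleN1r; apply: homZ. Qed.

Definition sym (x : A) := (2%:R : F)^-1 *: (x + sharp x).
Definition skw (x : A) := (2%:R : F)^-1 *: (x - sharp x).

Lemma sym_skw x : sym x + skw x = x.
Proof.
rewrite /sym /skw -scalerDr addrACA subrr addr0 -mulr2n -scaler_nat scalerA.
by rewrite mulVf // scale1r.
Qed.

Lemma good_sym i x : hom A0 A1 i x -> hom A0 A1 i (sym x) /\ sharp (sym x) = sym x.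
Proof.
move=> hx; split; first by apply/homZ/homD => //; apply: sharpH.
by rewrite /sym sharpZ sharpD sharpK addrC.
Qed.

Lemma good_skw i x : hom A0 A1 i x -> hom A0 A1 i (skw x) /\ sharp (skw x) = -1 *: skw x.
Proof.
move=> hx; split; first by apply/homZ/homD/homN => //; apply: sharpH.
by rewrite /skw sharpZ sharpD sharpN sharpK scaleN1r -scalerN opprB.
Qed.

Lemma decomp a : exists c : 'I_4 -> A, (forall t, good t (c t)) /\ a = \sum_(t < 4) c t.
Proof.
have [a0 [a1 [h0 h1 ->]]] := dec a.
exists (fun t : 'I_4 => match val t with 0 => sym a0 | 1 => skw a0 | 2 => sym a1 | _ => skw a1 end)%N.
split.
  case=> [[|[|[|[|k]]]] Hk] //=; rewrite /good /=.
  - by rewrite scale1r; apply: (good_sym (i := false)).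
  - by apply: (good_skw (i := false)).
  - by rewrite scale1r; apply: (good_sym (i := true)).
  - by apply: (good_skw (i := true)).
rewrite !big_ord_recr big_ord0 /= add0r.
by rewrite -addrA -[sym a0 + _ + _]addrA sym_skw addrA sym_skw.
Qed.

Lemma good0 t : good t 0.
Proof. by split; [apply: hom0 | rewrite sharp0 scaler0]. Qed.

End Decomp.


Section Core.
Variables (F : fieldType) (A : lmodType F) (mul : A -> A -> A).
Variables (A0 A1 : A -> Prop) (sharp : A -> A).
Hypothesis mulDl : forall (k : F) a b c, mul (k *: a + b) c = k *: mul a c + mul b c.
Hypothesis mulDr : forall (k : F) a b c, mul a (k *: b + c) = k *: mul a b + mul a c.
Hypothesis mulA : forall a b c, mul a (mul b c) = mul (mul a b) c.
Hypothesis two : (2%:R : F) != 0.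
Hypothesis sub0 : is_subspace A0.
Hypothesis sub1 : is_subspace A1.
Hypothesis dec : forall a, exists a0 a1, [/\ A0 a0, A1 a1 & a = a0 + a1].
Hypothesis sharpL : forall (k : F) a b, sharp (k *: a + b) = k *: sharp a + sharp b.
Hypothesis sharpH : forall (i : bool) a, hom A0 A1 i a -> hom A0 A1 i (sharp a).
Hypothesis sharpK : forall a, sharp (sharp a) = a.

Variables (n : 'I_4 -> nat) (i0 : 'I_4) (Q : {set 'I_(n i0)}) (r : {ffun 'S_(n i0) -> F}).
Hypothesis HQ : in_FS_Q Q r.

Local Notation adm := (admissible A0 A1 sharp).
Local Notation prod := (prod_seq mul).
Local Notation good := (good A0 A1 sharp).

Definition QV : seq nat := [seq val q | q <- enum Q].
Definition isS (v : var) : bool := (v.1 == i0) && (v.2 \in QV).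

Lemma fixv (s : 'S_(n i0)) v : r s != 0 -> ~~ isS v -> act_var i0 s v = v.
Proof.
move=> hr; rewrite /act_var /isS; case: v => a b /=.
case: eqP => [->|] //= nQ; rewrite /act_idx; case: insubP => [k _ kb|] //.
rewrite (HQ hr) ?kb //; apply: contra nQ => kQ.
by rewrite -kb; apply: map_f; rewrite mem_enum.
Qed.

Lemma actS (s : 'S_(n i0)) v : r s != 0 -> isS v -> isS (act_var i0 s v).
Proof.
move=> hr; rewrite /act_var /isS; case: v => a b /= /andP [/eqP -> /mapP [q]].
rewrite mem_enum => qQ ->; rewrite eqxx /= eqxx /=.
rewrite /act_idx valK /=; apply: map_f; rewrite mem_enum.
apply: contraT => sq; have := HQ hr sq; move/perm_inj => e.
by move: sq; rewrite e qQ.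
Qed.

Definition Slot := (var + ('I_4 * A))%type.
Definition sval (g : var -> A) (x : Slot) : A :=
  match x with inl v => g v | inr p => p.2 end.
Definition E (psi : var -> A) (L : seq Slot) : A :=
  \sum_(s <- enum {: 'S_(n i0)}) r s *: prod (map (sval (psi \o act_var i0 s)) L).

Fixpoint merge (L : seq Slot) : seq Slot :=
  match L with
  | [::] => [::]
  | inl v :: L' => inl v :: merge L'
  | inr p :: L' =>
    match merge L' with
    | inr p' :: L'' => inr (p.1, mul p.2 p'.2) :: L''
    | L'' => inr p :: L''
    end
  end.

Lemma merge_nil L : (merge L == [::]) = (L == [::]).
Proof. by case: L => [|[v|p] L] //=; case: (merge L) => [|[?|?] ?]. Qed.

Lemma map_nil (T1 T2 : eqType) (h : T1 -> T2) (L : seq T1) : L != [::] -> map h L != [::].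
Proof. by case: L. Qed.

Lemma prod_merge g L : prod (map (sval g) (merge L)) = prod (map (sval g) L).
Proof.
elim: L => [|[v|p] L IH] //.
  case: (eqVneq L [::]) => [-> //|nL].
  have nM : merge L != [::] by rewrite merge_nil.
  rewrite /= !(prod_cons mulA) ?IH //; exact: map_nil.
case: (eqVneq L [::]) => [-> //|nL].
have nM : merge L != [::] by rewrite merge_nil.
rewrite [map _ (inr p :: L)]/= (prod_cons mulA) ?map_nil // -IH.
rewrite [merge (inr p :: L)]/=.
case E1: (merge L) nM => [|[v|p'] L''] nM //.
  by rewrite /= (prod_cons mulA).
by rewrite /= /prod_seq /= (foldl_assoc mulA).
Qed.

Definition isl (x : Slot) : bool := if x is inl _ then true else false.
Definition lefts (L : seq Slot) : seq var :=
  pmap (fun x : Slot => if x is inl v then Some v else None) L.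
Definition tags (L : seq Slot) : seq 'I_4 :=
  pmap (fun x : Slot => if x is inr p then Some p.1 else None) L.
Fixpoint noadj (s : seq bool) : bool :=
  if s is b :: s' then (b || head true s') && noadj s' else true.

Lemma noadj_merge L : noadj (map isl (merge L)).
Proof.
elim: L => [|[v|p] L IH] //=.
by case: (merge L) IH => [|[v|p'] L''].
Qed.

Lemma lefts_merge L : lefts (merge L) = lefts L.
Proof.
elim: L => [|[v|p] L IH] //=; first by rewrite IH.
by case: (merge L) IH => [|[v|p'] L''].
Qed.

Lemma noadj_count s : noadj s -> (count negb s <= count id s + ~~ head true s)%N.
Proof.
elim: s => [|b s IH] //= /andP [h ns]; have := IH ns.
by case: b h; case: s {IH ns} => [|c s] /=; try case: c => /=; lia.
Qed.

Lemma count_isl L : count id (map isl L) = size (lefts L).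
Proof. by elim: L => [|[v|p] L IH] //=; rewrite IH. Qed.

Lemma count_isr L : count negb (map isl L) = size (tags L).
Proof. by elim: L => [|[v|p] L IH] //=; rewrite IH. Qed.

Lemma E_slot psi P R (q : 'I_4 * A) :
  E psi (P ++ inr q :: R) = \sum_(s <- enum {: 'S_(n i0)}) r s *:
      prod (map (sval (psi \o act_var i0 s)) P ++ q.2 :: map (sval (psi \o act_var i0 s)) R).
Proof. by apply: eq_bigr => s _; rewrite map_cat. Qed.

Lemma tag_all psi R P : E psi (P ++ R) != 0 ->
  exists T, [/\ map isl T = map isl R, lefts T = lefts R,
     (forall p, inr p \in T -> good p.1 p.2) & E psi (P ++ T) != 0].
Proof.
elim: R P => [|[v|p] R IH] P H.
- by exists [::]; split => // p.
- have [T [h1 h2 h3 h4]] : exists T, [/\ map isl T = map isl R, lefts T = lefts R,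
     (forall p, inr p \in T -> good p.1 p.2) & E psi (rcons P (inl v) ++ T) != 0].
    by apply: IH; rewrite cat_rcons.
  exists (inl v :: T); split; [by rewrite /= h1 | by rewrite /= h2 |
    by move=> p'; rewrite inE => /orP [//|/h3] | by move: h4; rewrite cat_rcons].
- have [c [gc ec]] := decomp two sub0 sub1 dec sharpL sharpH sharpK p.2.
  have : \sum_(t < 4) E psi (P ++ inr (t, c t) :: R) != 0.
    suff -> : \sum_(t < 4) E psi (P ++ inr (t, c t) :: R) = E psi (P ++ inr p :: R) by [].
    rewrite E_slot; under eq_bigr do rewrite E_slot.
    rewrite exchange_big /=; apply: eq_bigr => s _.
    by rewrite -scaler_sumr ec prod_sum.
  move/sum_nz => [t _ Ht].
  have [T [h1 h2 h3 h4]] : exists T, [/\ map isl T = map isl R, lefts T = lefts R,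
     (forall p, inr p \in T -> good p.1 p.2) & E psi (rcons P (inr (t, c t)) ++ T) != 0].
    by apply: IH; rewrite cat_rcons.
  exists (inr (t, c t) :: T); split => //=; first by rewrite h1.
  + by move=> p'; rewrite inE => /orP [/eqP [->] | /h3].
  + by move: h4; rewrite cat_rcons.
Qed.

Definition LN (N : nat) : seq nat := [seq x <- iota 0 N | x \notin QV].
Definition idx (k : nat) : nat := nth 0%N (LN (k.+1 + size QV)) k.

Lemma size_LN N : (N - size QV <= size (LN N))%N.
Proof.
have h : (count (mem QV) (iota 0 N) <= size QV)%N.
  rewrite -size_filter; apply: uniq_leq_size; first by rewrite filter_uniq // iota_uniq.
  by move=> x; rewrite mem_filter => /andP [].
have c := count_predC (mem QV) (iota 0 N); rewrite size_iota in c.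
have e : count (predC (mem QV)) (iota 0 N) = count (fun x => x \notin QV) (iota 0 N) by [].
rewrite /LN size_filter; rewrite e in c; by rewrite -{1}c leq_subLR leq_add2r.
Qed.

Lemma LN_pre N M : (N <= M)%N -> exists s, LN M = LN N ++ s.
Proof.
move=> NM; exists [seq x <- iota N (M - N) | x \notin QV].
by rewrite /LN -filter_cat -iotaD subnKC.
Qed.

Lemma idx_LN k N : (k.+1 + size QV <= N)%N -> idx k = nth 0%N (LN N) k.
Proof.
move=> h; have [s ->] := LN_pre h; rewrite nth_cat /idx ifT //.
by have := size_LN (k.+1 + size QV); lia.
Qed.

Lemma idx_mem k : idx k \in LN (k.+1 + size QV).
Proof. by rewrite /idx; apply: mem_nth; have := size_LN (k.+1 + size QV); rewrite addnK. Qed.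

Lemma idx_notQ k : idx k \notin QV.
Proof. by have := idx_mem k; rewrite mem_filter => /andP []. Qed.

Lemma idx_lt k : (idx k < k.+1 + size QV)%N.
Proof. by have := idx_mem k; rewrite mem_filter mem_iota => /andP [_ /andP []]. Qed.

Lemma idx_inj : injective idx.
Proof.
move=> k k' e; set N := (k.+1 + k'.+1 + size QV)%N.
have u : uniq (LN N) by rewrite filter_uniq // iota_uniq.
have s1 := size_LN N.
have l1 : (k.+1 + size QV <= N)%N by rewrite /N; lia.
have l2 : (k'.+1 + size QV <= N)%N by rewrite /N; lia.
have l3 : (N - size QV <= size (LN N))%N := s1.
move: e; rewrite (idx_LN l1) (idx_LN l2).
move/eqP; rewrite nth_uniq //; first by move/eqP.
  by apply: leq_trans l3; rewrite leq_subRL; lia.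
by apply: leq_trans l3; rewrite leq_subRL; lia.
Qed.

Definition mkvar (j : 'I_4) (k : nat) : var := if j == i0 then (i0, idx k) else (j, k).

Lemma mkvar1 j k : (mkvar j k).1 = j.
Proof. by rewrite /mkvar; case: eqP. Qed.

Lemma mkvar_nS j k : ~~ isS (mkvar j k).
Proof.
rewrite /mkvar /isS; case: (eqVneq j i0) => [ej|nj] /=; first by rewrite eqxx /= idx_notQ.
by rewrite (negbTE nj).
Qed.

Lemma mkvar_inj j k j' k' : mkvar j k = mkvar j' k' -> j = j' /\ k = k'.
Proof.
move=> e; have ej : j = j' by rewrite -(mkvar1 j k) -(mkvar1 j' k') e.
subst j'; split => //; move: e; rewrite /mkvar; case: eqP => _ [] //; exact: idx_inj.
Qed.

Definition bump (cnt : 'I_4 -> nat) (j : 'I_4) : 'I_4 -> nat :=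
  fun j' => if j' == j then (cnt j).+1 else cnt j'.

Fixpoint conv (cnt : 'I_4 -> nat) (T : seq Slot) : seq var :=
  match T with
  | [::] => [::]
  | inl v :: T' => v :: conv cnt T'
  | inr p :: T' => mkvar p.1 (cnt p.1) :: conv (bump cnt p.1) T'
  end.

Lemma conv_mem cnt T u : u \in conv cnt T <->
  u \in lefts T \/ exists j k, [/\ u = mkvar j k, (cnt j <= k)%N &
                                   (k < cnt j + count (pred1 j) (tags T))%N].
Proof.
elim: T cnt => [|[v|p] T IH] cnt /=.
- split => [//|[//|[j [k [_ h1 h2]]]]]; move: h2; rewrite /= addn0; lia.
- rewrite !inE; split.
    by case/orP => [->|/IH [->|h]]; [left|rewrite orbT; left|right].
  case => [/orP [->//|h]|h]; apply/orP; right; apply/IH; [by left|by right].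
- rewrite inE; split.
    case/orP => [/eqP ->|/IH [h|[j [k [e h1 h2]]]]]; [right|by left|right].
      by exists p.1, (cnt p.1); rewrite eqxx /=; split => //; lia.
    exists j, k; move: h1 h2; rewrite /bump /=.
    case: (eqVneq j p.1) => [ej|nj]; first by rewrite ej in e *; move=> h1 h2; split => //; lia.
    by move=> h1 h2; split => //; rewrite /= add0n.
  case => [h|[j [k [e h1 h2]]]]; apply/orP; first by right; apply/IH; left.
  case: (eqVneq j p.1) => [ej|nj].
    subst j; case: (eqVneq k (cnt p.1)) => [ek|nk]; first by left; rewrite e ek.
    right; apply/IH; right; exists p.1, k; rewrite /bump eqxx; split => //.
      by move: h1 nk; rewrite leq_eqVlt eq_sym => /orP [->|].
    by move: h2; rewrite /= eqxx; lia.
  right; apply/IH; right; exists j, k; rewrite /bump (negbTE nj); split => //.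
  by move: h2; rewrite /= eq_sym (negbTE nj).
Qed.

Lemma conv_mem1 cnt T u : u \in conv cnt T ->
  u \in lefts T \/ exists j k, u = mkvar j k /\ (cnt j <= k)%N.
Proof. by move/conv_mem => [h|[j [k [e h1 _]]]]; [left|right; exists j, k]. Qed.

Lemma bump_gt cnt j : (cnt j < bump cnt j j)%N.
Proof. by rewrite /bump eqxx. Qed.

Lemma bump_ge cnt j j' : (cnt j' <= bump cnt j j')%N.
Proof. by rewrite /bump; case: eqP => // ->. Qed.

Lemma uniq_conv cnt T : uniq (lefts T) -> (forall v, v \in lefts T -> isS v) ->
  uniq (conv cnt T).
Proof.
elim: T cnt => [|[v|p] T IH] cnt //=.
  move=> /andP [vT uT] hS; rewrite IH ?andbT //; last by move=> u hu; apply: hS; rewrite inE hu orbT.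
  apply/negP => /conv_mem1 [h|[j [k [e _]]]]; first by rewrite h in vT.
  by have := hS v; rewrite inE eqxx e (negbTE (mkvar_nS j k)) => /(_ isT).
move=> uT hS; rewrite IH // andbT; apply/negP => /conv_mem1 [h|[j [k [e h1]]]].
  by have := mkvar_nS p.1 (cnt p.1); rewrite (hS _ h).
have [ej ek] := mkvar_inj e; rewrite -ej -ek in h1.
by have := bump_gt cnt p.1; rewrite ltnNge h1.
Qed.

Fixpoint phiT (psi : var -> A) (cnt : 'I_4 -> nat) (T : seq Slot) : var -> A :=
  match T with
  | [::] => fun v => if isS v then psi v else 0
  | inl _ :: T' => phiT psi cnt T'
  | inr p :: T' => fun v => if v == mkvar p.1 (cnt p.1) then p.2
                            else phiT psi (bump cnt p.1) T' v
  end.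

Lemma phiT_S psi cnt T v : isS v -> phiT psi cnt T v = psi v.
Proof.
elim: T cnt => [|[w|p] T IH] cnt hv /=; first by rewrite hv.
  exact: IH.
case: eqP => [e|_]; last exact: IH.
by have := mkvar_nS p.1 (cnt p.1); rewrite -e hv.
Qed.

Lemma phiT_adm psi cnt T : adm psi -> (forall p, inr p \in T -> good p.1 p.2) ->
  adm (phiT psi cnt T).
Proof.
move=> hpsi; elim: T cnt => [|[w|p] T IH] cnt hT v /=.
- case: ifP => _; first exact: hpsi.
  by have := good0 sub0 sub1 sharpL v.1.
- by apply: IH => p hp; apply: hT; rewrite inE hp orbT.
- case: eqP => [->|_].
    by rewrite mkvar1; apply: (hT p); rewrite inE eqxx.
  by apply: IH => p' hp; apply: hT; rewrite inE hp orbT.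
Qed.

Lemma phiT_eval psi (s : 'S_(n i0)) cnt T : r s != 0 -> (forall v, v \in lefts T -> isS v) ->
  map (phiT psi cnt T \o act_var i0 s) (conv cnt T) = map (sval (psi \o act_var i0 s)) T.
Proof.
move=> hr; elim: T cnt => [|[v|p] T IH] cnt //= hS.
  rewrite phiT_S ?actS ?IH //; first by move=> u hu; apply: hS; rewrite inE hu orbT.
  by apply: hS; rewrite inE eqxx.
rewrite fixv // ?mkvar_nS // eqxx; congr (_ :: _); rewrite -(IH (bump cnt p.1)) //.
apply/eq_in_map => u /conv_mem1 hu /=; case: eqP => // e; exfalso.
case: hu => [h|[j [k [eu h1]]]].
  by have := mkvar_nS p.1 (cnt p.1); rewrite -e actS // hS.
rewrite eu fixv ?mkvar_nS // in e; have [ej ek] := mkvar_inj e.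
by rewrite ej ek in h1; have := bump_gt cnt p.1; rewrite ltnNge h1.
Qed.

Lemma sum_count (s : seq 'I_4) : (\sum_(j < 4) count (pred1 j) s)%N = size s.
Proof.
elim: s => [|x s IH] /=; first by rewrite big1.
rewrite big_split /= IH (bigD1 x) //= eqxx big1 ?addn0 //.
by move=> j; rewrite eq_sym => /negbTE ->.
Qed.

Lemma uniq_pairs (s : seq 'I_4) (t : 'I_4 -> nat) :
  uniq s -> uniq [seq ((j, k) : var) | j <- s, k <- iota 0 (t j)].
Proof.
elim: s => //= j s IH /andP [js us]; rewrite cat_uniq IH // andbT.
rewrite map_inj_uniq ?iota_uniq //=; last by move=> a a' [].
apply/hasPn => u /allpairsPdep [j' [k [j's _ ->]]]; apply/negP => /mapP [k' _ [e _]].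
by move: js; rewrite -e j's.
Qed.

Definition L0 (psi : var -> A) (W : seq var) : seq Slot :=
  map (fun v => if isS v then inl v else inr (ord0, psi v)) W.

Lemma lefts_L0 psi W : lefts (L0 psi W) = filter isS W.
Proof. by elim: W => [|v W IH] //=; case: ifP => _ /=; rewrite IH. Qed.

Lemma size_QV : size QV = #|Q|.
Proof. by rewrite size_map cardE. Qed.

Lemma uniq_QV : uniq QV.
Proof. by rewrite map_inj_uniq ?enum_uniq //; exact: val_inj. Qed.

Lemma isSP u : reflect (exists2 x, x \in QV & u = (i0, x)) (isS u).
Proof.
rewrite /isS; case: u => a b /=; apply: (iffP andP) => [[/eqP -> h]|[x h [-> ->]]].
  by exists b.
by rewrite eqxx.
Qed.

Lemma core psi W m : #|Q| = (m ^ 2)%N -> adm psi -> uniq W ->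
  (forall q : 'I_(n i0), q \in Q -> (i0, val q) \in W) ->
  \sum_(s <- enum {: 'S_(n i0)}) r s *: eval_mon mul (psi \o act_var i0 s) W != 0 ->
  exists t : 'I_4 -> nat,
    [/\ (m ^ 2 <= t i0)%N,
        (m ^ 2 <= \sum_(j < 4) t j)%N,
        (\sum_(j < 4) t j <= 2 * m ^ 2 + 1)%N &
    exists X : seq nat,
      [/\ uniq X, size X = t i0,
          (forall q : 'I_(n i0), q \in Q -> val q \in X),
          (forall x, x \in X -> (forall q : 'I_(n i0), q \in Q -> val q != x) ->
             (x < t i0)%N) &
      exists w : monom,
        perm_eq w ([seq (j, k) | j <- [seq j <- enum 'I_4 | j != i0],
                                 k <- iota 0 (t j)]
                   ++ [seq (i0, x) | x <- X]) /\
        ~ id_zero mul A0 A1 sharp (act_poly i0 r [:: (1, w)])]].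
Proof.
move=> HQm hpsi uW hW H0.
have E0 : E psi (L0 psi W) = \sum_(s <- enum {: 'S_(n i0)}) r s *: eval_mon mul (psi \o act_var i0 s) W.
  apply: eq_bigr => s _; case: (eqVneq (r s) 0) => [->|hr]; first by rewrite !scale0r.
  rewrite eval_monE /L0 -map_comp; congr (_ *: prod _); apply: eq_map => v /=.
  by case: ifP => hv //=; rewrite fixv // hv.
have E1 : E psi (merge (L0 psi W)) = E psi (L0 psi W).
  by apply: eq_bigr => s _; rewrite prod_merge.
have [T [h1 h2 h3 h4]] := @tag_all psi (merge (L0 psi W)) [::] ltac:(by rewrite /= E1 E0).
have lT : lefts T = filter isS W by rewrite h2 lefts_merge lefts_L0.
have SW : forall u, isS u -> u \in W.
  move=> u /isSP [x /mapP [q]]; rewrite mem_enum => qQ -> ->; exact: hW.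
have memL : forall u, (u \in lefts T) = isS u.
  by move=> u; rewrite lT mem_filter; case: (boolP (isS u)) => // /SW ->.
have sizeL : size (lefts T) = (m ^ 2)%N.
  rewrite lT -HQm -size_QV -(size_map (pair i0) QV); apply: perm_size; apply: uniq_perm.
  - exact: filter_uniq.
  - by rewrite map_inj_uniq ?uniq_QV // => a b [].
  - move=> u; rewrite mem_filter; apply/idP/idP => [/andP [/isSP [x hx ->] _]|/mapP [x hx ->]].
      exact: map_f.
    by have hs : isS (i0, x) by [apply/isSP; exists x]; rewrite hs SW.
have noT : noadj (map isl T) by rewrite h1 noadj_merge.
have sizeT : (size (tags T) <= m ^ 2 + 1)%N.
  rewrite -count_isr -sizeL -count_isl; apply: leq_trans (noadj_count noT) _.
  by rewrite leq_add2l; case: (head _ _).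
set c := fun j => count (pred1 j) (tags T).
have sumt : (\sum_(j < 4) ((if j == i0 then m ^ 2 else 0) + c j) = m ^ 2 + size (tags T))%N.
  rewrite big_split /= sum_count; congr (_ + _)%N.
  by rewrite (bigD1 i0) //= eqxx big1 ?addn0 // => j /negbTE ->.
exists (fun j => (if j == i0 then m ^ 2 else 0) + c j)%N; rewrite sumt eqxx; split.
- exact: leq_addr.
- exact: leq_addr.
- by move: sizeT; lia.
set e := c i0.
exists (QV ++ map idx (iota 0 e)); split.
- rewrite cat_uniq uniq_QV /= (map_inj_uniq idx_inj) iota_uniq andbT.
  by apply/hasPn => x /mapP [k _ ->]; exact: idx_notQ.
- by rewrite size_cat size_map size_iota size_QV HQm.
- by move=> q qQ; rewrite mem_cat; apply/orP; left; apply: map_f; rewrite mem_enum.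
- move=> x; rewrite mem_cat => /orP [hx|/mapP [k]] hq.
    exfalso; case/mapP: hx => q; rewrite mem_enum => qQ ex.
    by have := hq q qQ; rewrite ex eqxx.
  move=> ->; move: hq; rewrite mem_iota => /andP [_ hk] _.
  have := idx_lt k; rewrite size_QV HQm; move: hk; rewrite /e; lia.
have hS : forall v, v \in lefts T -> isS v by move=> v; rewrite memL.
exists (conv (fun _ => 0%N) T); split.
  apply: uniq_perm.
  - by apply: uniq_conv => //; rewrite lT filter_uniq.
  - rewrite cat_uniq uniq_pairs /=; last by rewrite filter_uniq // enum_uniq.
    rewrite map_inj_uniq; last by move=> a b [].
    rewrite cat_uniq uniq_QV /= (map_inj_uniq idx_inj) iota_uniq !andbT.
    apply/andP; split.
      apply/hasPn => u /mapP [x _ ->]; apply/negP => /allpairsPdep [j [k [hj _ []]]] ej _.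
      by move: hj; rewrite mem_filter -ej eqxx.
    by apply/hasPn => x /mapP [k _ ->]; exact: idx_notQ.
  move=> u; apply/idP/idP.
    move/conv_mem => [|[j [k [-> _ hk]]]]; rewrite mem_cat.
      rewrite memL => /isSP [x hx ->]; apply/orP; right; apply/mapP; exists x => //.
      by rewrite mem_cat hx.
    rewrite /mkvar; case: (eqVneq j i0) => [ej|nj].
      apply/orP; right; apply: map_f; rewrite mem_cat; apply/orP; right; apply: map_f.
      by rewrite mem_iota /e /c -ej.
    apply/orP; left; apply/allpairsPdep; exists j, k; split => //.
      by rewrite mem_filter nj mem_enum.
    by rewrite (negbTE nj) add0n mem_iota.
  rewrite mem_cat => /orP [/allpairsPdep [j [k [hj hk ->]]]|/mapP [x hx ->]]; apply/conv_mem.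
    move: hj hk; rewrite mem_filter mem_enum andbT => nj; rewrite (negbTE nj) add0n mem_iota => hk.
    right; exists j, k; split => //; by rewrite /mkvar (negbTE nj).
  move: hx; rewrite mem_cat => /orP [hx|/mapP [k hk ->]].
    by left; rewrite memL; apply/isSP; exists x.
  right; exists i0, k; split => //; first by rewrite /mkvar eqxx.
  by move: hk; rewrite mem_iota.
move=> hz.
have := hz (phiT psi (fun _ => 0%N) T) (phiT_adm _ hpsi h3).
apply/eqP; move: h4; rewrite cat0s; apply: contraNneq => <-.
rewrite eval_act_poly; apply/eqP; apply: eq_bigr => s _.
case: (eqVneq (r s) 0) => [->|hr]; first by rewrite !scale0r.
by rewrite /eval_poly big_cons big_nil addr0 scale1r eval_monE phiT_eval.
Qed.

End Core.

Theorem proposition4p1 (F : fieldType) (A : lmodType F) (mul : A -> A -> A)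
    (A0 A1 : A -> Prop) (sharp : A -> A) (kind : bool)
    (n : 'I_4 -> nat) (m : nat) (i0 : 'I_4) (Q : {set 'I_(n i0)})
    (rho : forall j : 'I_4, {ffun 'S_(n j) -> F}) (f : fpoly F) :
  [pchar F] =i pred0 ->
  sharp_superalgebra mul A0 A1 sharp kind ->
  (forall j, (0 < n j)%N) -> (0 < m)%N ->
  (m ^ 2 <= n i0)%N -> #|Q| = (m ^ 2)%N ->
  in_FS_Q Q (rho i0) ->
  in_P n f ->
  ~ id_zero mul A0 A1 sharp (act_tensor rho f) ->
  exists t : 'I_4 -> nat,
    [/\ (m ^ 2 <= t i0)%N,
        (m ^ 2 <= \sum_(j < 4) t j)%N,
        (\sum_(j < 4) t j <= 2 * m ^ 2 + 1)%N &
    exists X : seq nat,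
      [/\ uniq X, size X = t i0,
          (forall q : 'I_(n i0), q \in Q -> val q \in X),
          (forall x, x \in X -> (forall q : 'I_(n i0), q \in Q -> val q != x) ->
             (x < t i0)%N) &
      exists w : monom,
        perm_eq w ([seq (j, k) | j <- [seq j <- enum 'I_4 | j != i0],
                                 k <- iota 0 (t j)]
                   ++ [seq (i0, x) | x <- X]) /\
        ~ id_zero mul A0 A1 sharp (act_poly i0 (rho i0) [:: (1, w)])]].
Proof.
move=> hchar Hsa _ _ _ HQm HFS HP Hnz.
case: Hsa => mulA mulDl mulDr [sub0 sub1 dec _ _] [sharpL sharpH sharpK _].
have two := two_nz hchar.
have [phi Hphi] := not_all_ex_not _ _ Hnz.
have [Hadm Hne] := imply_to_and _ _ Hphi.
have Hne' : eval_poly mul phi (act_tensor rho f) != 0 by apply/eqP.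
have [psi hpsi H] := stepA (rho := rho) (i0 := i0) (p := f) (enum_uniq _) (mem_enum _ i0) Hadm Hne'.
have : \sum_(c <- f) c.1 *: (\sum_(s <- enum {: 'S_(n i0)}) rho i0 s *:
          eval_mon mul (psi \o act_var i0 s) c.2) != 0.
  move: H; rewrite /eval_poly; under eq_bigr do rewrite scaler_sumr.
  rewrite exchange_big; congr (~~ (_ == _)); apply: eq_bigr => c _; rewrite scaler_sumr.
  by apply: eq_bigr => s _; rewrite !scalerA mulrC.
move/sum_nz => [c cf Hc].
have Hc' : \sum_(s <- enum {: 'S_(n i0)}) rho i0 s *:
          eval_mon mul (psi \o act_var i0 s) c.2 != 0.
  by apply: contraNneq Hc => ->; rewrite scaler0.
have pW : perm_eq c.2 (ml_vars n) by have := allP HP c cf.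
apply: (core mulDl mulDr mulA two sub0 sub1 dec sharpL sharpH sharpK HFS HQm hpsi _ _ Hc').
  by rewrite (perm_uniq pW) /ml_vars uniq_pairs // enum_uniq.
move=> q qQ; rewrite (perm_mem pW); apply/allpairsPdep; exists i0, (val q).
by rewrite mem_enum mem_iota ltn_ord.
Qed.
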